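(* Let $G$ be a graph, let $G'$ be a 2-connected bipartite subgraph of $G$, and let $B$ be a 2-connected subgraph of $G$ that contains $G'$ as a subgraph. If $B$ is not bipartite, then $B$ contains a bad path for $G'$.
   Context: Since $G'$ is connected and bipartite, its bipartition into two parts is unique. A path $P_{uv}$ in $G$ with endpoints $u,v$ is a bad path for $G'$ if $u,v\in V(G')$, all other vertices of $P_{uv}$ lie in $V(G)\setminus V(G')$, and at least one of the following holds: (a) $u,v$ are in the same part of $G'$ and $P_{uv}$ has odd length (number of edges); (b) $u,v$ are in different parts of $G'$ and $P_{uv}$ has even length. *)

(* Defs.v *)
From mathcomp Require Import all_boot.
Set Implicit Arguments. Unset Strict Implicit. Unset Printing Implicit Defensive.

Section Graphs.
Variable T : finType.

Definition simple_graph (e : rel T) : Prop :=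
  (forall x y, e x y = e y x) /\ (forall x, ~~ e x x).

Definition subgraph_of (V1 : {set T}) (E1 : rel T) (V2 : {set T}) (E2 : rel T) : Prop :=
  [/\ V1 \subset V2,
      (forall x y, E1 x y = E1 y x) &
      (forall x y, E1 x y -> [&& E2 x y, x \in V1 & y \in V1])].

Definition restr (V : {set T}) (E : rel T) : rel T :=
  fun x y => [&& E x y, x \in V & y \in V].

Definition connected_graph (V : {set T}) (E : rel T) : Prop :=
  forall x y, x \in V -> y \in V -> connect (restr V E) x y.

Definition two_connected (V : {set T}) (E : rel T) : Prop :=
  [/\ 3 <= #|V|, connected_graph V E &
      forall z, z \in V -> connected_graph (V :\ z) E].

Definition bipartition (V : {set T}) (E : rel T) (c : T -> bool) : Prop :=
  forall x y, x \in V -> y \in V -> E x y -> c x != c y.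

Definition bipartite (V : {set T}) (E : rel T) : Prop :=
  exists c, bipartition V E c.

(* u and v lie in the same part of the (connected, hence uniquely
   bipartitioned) bipartite graph (V,E). *)
Definition same_part (V : {set T}) (E : rel T) (u v : T) : Prop :=
  forall c, bipartition V E c -> c u = c v.

(* A path in (VB,EB): vertex sequence u :: p, pairwise distinct, all vertices
   in VB, consecutive vertices adjacent in EB.  Its length is size p and its
   endpoints are u and last u p. *)
Definition is_path_in (VB : {set T}) (EB : rel T) (u : T) (p : seq T) : Prop :=
  [/\ path EB u p, uniq (u :: p) & all (fun x => x \in VB) (u :: p)].

Definition bad_path (V' : {set T}) (E' : rel T) (u : T) (p : seq T) : Prop :=
  let v := last u p in
  [/\ u \in V', v \in V',
      all (fun x => x \notin V') (behead (belast u p)) &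
      (same_part V' E' u v /\ odd (size p)) \/
      (~ same_part V' E' u v /\ ~~ odd (size p))].

End Graphs.

(* Main.v *)
Require Import Defs.
From mathcomp Require Import all_boot.
From mathcomp Require Import zify.
From Stdlib Require Import ClassicalEpsilon Classical.
Set Implicit Arguments. Unset Strict Implicit. Unset Printing Implicit Defensive.

Lemma ar1 a b d n : a + (b + d.+1).+1 <= n.+1 -> b.+1 <= n /\ (d + a).+1 <= n.
Proof. lia. Qed.
Lemma ar2 a b n : (a + b.+1).+1 <= n.+1 -> a.+1 <= n /\ b.+1 <= n.
Proof. lia. Qed.
Lemma ar3 a b n : a + b.+1 <= n.+1 -> 0 < b -> a.+1 <= n /\ b <= n.
Proof. lia. Qed.
Lemma ar4 a b d n : a + (b + d.+1).+1 <= n.+1 -> a + d.+1 <= n /\ b.+1 <= n.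
Proof. lia. Qed.

Lemma ar5 a b n : a + b.+1 <= n.+1 -> a.+1 <= n.+1 /\ b <= n.
Proof. lia. Qed.

Section Gen.
Variable T : eqType.
Implicit Types (s p q : seq T) (x y : T).

Lemma dup_split s : ~~ uniq s ->
  exists s1 y s2 s3, s = s1 ++ y :: s2 ++ y :: s3.
Proof.
elim: s => [|x s IH] //=.
case xs: (x \in s) => /=.
  by move=> _; case/splitPr: xs => p1 p2; exists [::], x, p1, p2.
move/IH=> [s1 [y [s2 [s3 ->]]]]; by exists (x :: s1), y, s2, s3.
Qed.

Lemma revI x p : last x p :: rev (belast x p) = rev (x :: p).
Proof. by rewrite [x :: p]lastI rev_rcons. Qed.

Lemma last_rev_belast x p : last (last x p) (rev (belast x p)) = x.
Proof. by case: p => [|a p] //=; rewrite rev_cons last_rcons. Qed.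

Lemma first_hit (Z : pred T) a p : ~~ Z a -> Z (last a p) ->
  exists p1 z p2, [/\ p = p1 ++ z :: p2, Z z & all (fun w => ~~ Z w) p1].
Proof.
elim: p a => [|b p IH] a /=; first by move/negPf->.
move=> _; case Zb: (Z b).
  by move=> _; exists [::], b, p.
move/(IH b (negbT Zb)) => [p1 [z [p2 [-> Zz Hp1]]]].
by exists (b :: p1), z, p2; rewrite /= Zb.
Qed.

Lemma hit_path (r : rel T) (A Z : pred T) (disj : forall w, A w -> Z w -> False) :
  forall p a, A a -> path r a p -> Z (last a p) ->
  exists y q, [/\ A y, path r y q, Z (last y q), all (fun w => ~~ A w) q
                & all (fun w => ~~ Z w) (belast y q)].
Proof.
move=> p; have [n] := ubnP (size p); elim: n p => // n IH p Hn a Aa Hp Zl.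
case hA: (has A p).
  case/hasP: hA => w wp Aw; case/splitPr: wp Hn Hp Zl => p1 p2 Hn.
  rewrite cat_path last_cat /= => /andP [_ /andP [_ Hp2]] Zl.
  apply: (IH p2 _ w Aw Hp2 Zl).
  by move: Hn; rewrite size_cat /=; lia.
have nZa : ~~ Z a by apply/negP => /(disj _ Aa).
have [p1 [z [p2 [Ep Zz Hp1]]]] := first_hit nZa Zl.
exists a, (rcons p1 z); rewrite last_rcons belast_rcons /= nZa Hp1; split => //.
- by move: Hp; rewrite Ep cat_path rcons_path /= => /andP [-> /andP [-> _]].
- have hA' : all (fun w => ~~ A w) p by rewrite (all_predC A) hA.
  by move: hA'; rewrite Ep all_cat all_rcons /= => /andP [-> /andP [-> _]].
Qed.

Lemma hit_uniq (r : rel T) (A Z : pred T) (disj : forall w, A w -> Z w -> False) p a :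
  A a -> path r a p -> Z (last a p) ->
  exists y q, [/\ A y, path r y q, Z (last y q), uniq (y :: q)
                & all (fun w => ~~ A w) q /\ all (fun w => ~~ Z w) (belast y q)].
Proof.
move=> Aa Hp Zl.
have [y [q [Ay Hq Zq HAq HZq]]] := hit_path disj Aa Hp Zl.
have P1 : path r y (shorten y q) by case: (shortenP Hq).
have U1 : uniq (y :: shorten y q) by case: (shortenP Hq).
have S1 : {subset shorten y q <= q} by case: (shortenP Hq).
have L1 : last y (shorten y q) = last y q by case: (shortenP Hq).
exists y, (shorten y q); split => //; first by rewrite L1.
split.
  by apply/allP => w /S1 wq; move/allP: HAq; apply.
apply/allP => w wb.
have wl : w != last y (shorten y q).
  apply/negP => /eqP Ew; move: U1; rewrite lastI rcons_uniq -Ew wb //.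
have : w \in y :: q.
  by move: (mem_belast wb); rewrite inE => /orP [/eqP ->|/S1 wq]; rewrite inE ?eqxx ?wq ?orbT.
rewrite lastI mem_rcons inE -L1 (negPf wl) /=.
by move/allP: HZq; apply.
Qed.

Definition route (E : rel T) (cyc : seq T) x y p :=
  [/\ path E x p, last x p = y, uniq (x :: p) & {subset p <= cyc}].

Lemma routes (E : rel T) (Esym : symmetric E) cyc x y :
  cycle E cyc -> uniq cyc -> odd (size cyc) -> x \in cyc -> y \in cyc -> x != y ->
  exists p1 p2, [/\ route E cyc x y p1, route E cyc x y p2
                  & odd (size p1) = ~~ odd (size p2)].
Proof.
move=> Cc Uc Oc xc yc xy.
case: (rot_to xc) => i s Hrot.
have Cs : cycle E (x :: s) by rewrite -Hrot rot_cycle.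
have Us : uniq (x :: s) by rewrite -Hrot rot_uniq.
have Ss : size (x :: s) = size cyc by rewrite -Hrot size_rot.
have Ms : forall w, w \in x :: s -> w \in cyc by move=> w; rewrite -Hrot mem_rot.
have ys : y \in s by move: (yc); rewrite -(mem_rot i) Hrot inE eq_sym (negPf xy).
case/splitPr: ys Cs Us Ss Ms => s1 s2 Cs Us Ss Ms.
move: Cs; rewrite /= rcons_cat cat_path /= => /andP [Hs1 /andP [Ey Hs2]].
have Esym' : (fun a b => E b a) =2 E by move=> a b; rewrite Esym.
exists (rcons s1 y), (rev (y :: s2)); split.
- split.
  + by rewrite rcons_path Hs1.
  + by rewrite last_rcons.
  + by move: Us; rewrite -cat_rcons -[x :: (rcons s1 y ++ s2)]/((x :: rcons s1 y) ++ s2)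
        cat_uniq => /andP [].
  + move=> w wp; apply: Ms; move: wp; rewrite mem_rcons inE.
    by case/orP => [/eqP ->|H]; rewrite inE mem_cat inE ?eqxx ?H ?orbT.
- split.
  + have := rev_path E y (rcons s2 x).
    rewrite last_rcons belast_rcons (eq_path Esym') => ->.
    by [].
  + by rewrite rev_cons last_rcons.
  + move: Us; rewrite /= mem_cat negb_or cat_uniq => /andP [/andP [_ xys] /and3P [_ _ U2]].
    by rewrite mem_rev xys rev_uniq.
  + move=> w; rewrite mem_rev => wp; apply: Ms.
    by rewrite inE mem_cat wp !orbT.
- move: Oc; rewrite -Ss /= size_cat /= size_rcons size_rev /= addnS.
  by rewrite /= !oddD /=; case: (odd (size s1)); case: (odd (size s2)).
Qed.

Lemma uniq3 (a b d : seq T) : uniq a -> uniq b -> uniq d ->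
  (forall w, w \in a -> w \in b -> False) -> (forall w, w \in a -> w \in d -> False) ->
  (forall w, w \in b -> w \in d -> False) -> uniq (a ++ b ++ d).
Proof.
move=> Ua Ub Ud Hab Had Hbd; rewrite cat_uniq Ua cat_uniq Ub Ud /= andbT has_cat negb_or.
rewrite -andbA; apply/and3P; split; apply/hasPn => w wx; apply/negP => wa.
- exact: Hab wa wx.
- exact: Had wa wx.
- exact: Hbd wa wx.
Qed.

Lemma mem_lastI w y r : w \in y :: r -> (w \in belast y r) || (w == last y r).
Proof. by rewrite lastI mem_rcons inE orbC. Qed.
End Gen.

Section Graph.
Variable T : finType.
Variables (VB V' : {set T}) (EB E' : rel T) (c : T -> bool).
Hypothesis EBsym : forall x y, EB x y = EB y x.
Hypothesis EBirr : forall x, ~~ EB x x.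
Hypothesis VsubB : V' \subset VB.
Hypothesis connV : connected_graph V' E'.
Hypothesis bipc : bipartition V' E' c.
Hypothesis NB : forall u p, is_path_in VB EB u p -> ~ bad_path V' E' u p.
Hypothesis connB : connected_graph VB EB.
Hypothesis conn2 : forall z, z \in VB -> connected_graph (VB :\ z) EB.
Hypothesis card2 : 1 < #|V'|.

Local Notation E := (restr VB EB).

Lemma Esym : symmetric E.
Proof. by move=> x y; rewrite /restr EBsym; case: (x \in VB); case: (y \in VB); rewrite ?andbF ?andbT. Qed.

Lemma Esym' : (fun a b => E b a) =2 E.
Proof. by move=> a b; rewrite Esym. Qed.

Lemma VV w : w \in V' -> w \in VB.
Proof. by move/(subsetP VsubB). Qed.

Lemma path_in (S : {set T}) u q : u \in S -> path (restr S EB) u q ->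
  forall w, w \in u :: q -> w \in S.
Proof.
elim: q u => [|a q IH] u uS /=; first by move=> _ w; rewrite inE => /eqP ->.
case/andP => /and3P [_ _ aS] Hq w; rewrite inE => /orP [/eqP -> //|].
exact: IH.
Qed.

Lemma restr_sub (S : {set T}) : S \subset VB -> subrel (restr S EB) E.
Proof.
move=> sub x y /and3P [H xS yS]; apply/and3P; split => //; exact: (subsetP sub).
Qed.

Lemma cycle_VB cyc x : cycle E cyc -> x \in cyc -> x \in VB.
Proof.
move=> Cc xc; case: (rot_to xc) => i s H.
have : cycle E (x :: s) by rewrite -H rot_cycle.
by case: s {H} => [|a s] /=; [case/andP => /and3P [] | case/andP => /and3P []].
Qed.

Lemma same_partP u v : u \in V' -> v \in V' -> c u = c v -> same_part V' E' u v.
Proof.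
move=> uV vV cuv c' Hc'.
have := connV uV vV; case/connectP => p Hp Ev; subst v.
suff : (c u == c' u) = (c (last u p) == c' (last u p)).
  by move: cuv; case: (c u); case: (c (last u p)); case: (c' u); case: (c' (last u p)).
elim: p u {uV vV cuv} Hp => [|a p IH] u //= /andP [/and3P [Eua uV aV] Hp].
rewrite -IH //.
have := bipc uV aV Eua; have := Hc' u a uV aV Eua.
by case: (c u); case: (c a); case: (c' u); case: (c' a).
Qed.

Lemma NBgood u q : path E u q -> uniq (u :: q) -> u \in V' -> last u q \in V' ->
  {in q, forall w, w \in V' -> w = last u q} ->
  c u (+) c (last u q) = odd (size q).
Proof.
move=> Pq Uq uV lV Hq.
case: (boolP (c u (+) c (last u q) == odd (size q))) => [/eqP //|H].
exfalso; apply: (NB (u := u) (p := q)).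
  rewrite /is_path_in; split => //; first by apply: sub_path Pq => x y /and3P [].
  apply/allP => w; apply: path_in => //; exact: VV.
rewrite /bad_path; split => //.
  case: q Pq Uq Hq {lV H} => [|a q] // Pq Uq Hq.
  apply/allP => w /= wb; apply/negP => wV.
  have wl : w != last a q.
    have Ua : uniq (a :: q) by move: Uq; rewrite [uniq (u :: _)]/= => /andP [].
    by apply/negP => /eqP Ew; move: Ua; rewrite lastI rcons_uniq -Ew wb.
  have Ew := Hq w (mem_belast wb) wV.
  by rewrite Ew eqxx in wl.
case Hc: (c u == c (last u q)).
  left; split; first by apply: same_partP => //; apply/eqP.
  by move: H; rewrite (eqP Hc) addbb; case: (odd (size q)).
right; split.
  by move=> sp; have := sp c bipc; move/eqP; rewrite Hc.
by move: H Hc; case: (c u); case: (c (last u q)); case: (odd (size q)).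
Qed.


Lemma two_in (A : {pred T}) x : 1 < #|A| -> exists y, y \in A /\ y != x.
Proof.
case/card_gt1P => a [b [aA bA ab]].
case: (eqVneq a x) => [Eax|ax]; last by exists a.
by exists b; split => //; rewrite -Eax eq_sym.
Qed.

Lemma stem_ind n : forall cyc x st, size st < n -> cycle E cyc -> uniq cyc ->
  odd (size cyc) -> x \in cyc -> path E x st -> uniq (x :: st) -> last x st \in V' ->
  (forall w, w \in cyc -> w \in V' -> w = x) -> (x \in V' -> st = [::]) ->
  {in st, forall w, w \in V' -> w = last x st} ->
  (forall w, w \in st -> w \notin cyc) -> False.
Proof.
elim: n => // n IH cyc x st Hn Cc Uc Oc xc Pst Ust Lst Hav1 Hav2 Hint Hdis.
have xVB := cycle_VB Cc xc.
have cVB : forall w, w \in cyc -> w \in VB := fun w => cycle_VB Cc.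
have [y0 [y0c y0x]] : exists y0, y0 \in cyc /\ y0 != x.
  apply: two_in; rewrite (card_uniqP Uc).
  case: cyc Cc Oc {Uc xc Hav1 Hdis cVB} => [|a [|b s]] //=.
  by rewrite andbT => /and3P []; rewrite (negPf (EBirr a)).
have [t [tV tx]] := two_in x card2.
have := conn2 xVB (x := y0) (y := t).
rewrite !in_setD1 y0x tx cVB // VV // => /(_ isT isT) /connectP [p Pp Ept].
pose A := [pred w | (w \in cyc) && (w != x)].
pose Z := [pred w | (w \in V') || (w \in st)].
have disj : forall w, A w -> Z w -> False.
  move=> w /andP [wc wx] /orP [wV|wst].
    by move: wx; rewrite (Hav1 w wc wV) eqxx.
  by move: (Hdis w wst); rewrite wc.
have := hit_uniq disj (a := y0) (p := p) _ Pp.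
rewrite -Ept /A /Z /= y0c y0x tV => /(_ isT isT) [y [r [/andP [yc yx] Pr Zl Ur [Ar Zr]]]].
have yS : y \in VB :\ x by rewrite in_setD1 yx cVB.
have rS := path_in yS Pr.
have xr : x \notin r.
  by apply/negP => xr; have := rS x; rewrite inE xr orbT in_setD1 eqxx => /(_ isT).
have PrE : path E y r := sub_path (restr_sub (subD1set VB x)) Pr.
have ny : ~~ Z y by apply/negP => /(disj y); apply; rewrite /A /= yc yx.
set z := last y r in Zl.
have zr : z \in r.
  have := mem_last y r; rewrite -/z inE => /orP [/eqP zy|//].
  by move: ny; rewrite -zy /Z /= Zl.
have memr : forall w, w \in r -> w = z \/ ~~ Z w.
  move=> w wr; have := mem_lastI (y := y) (r := r) (w := w).
  rewrite inE wr orbT => /(_ isT) /orP [wb|/eqP ->]; last by left.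
  by right; move/allP: Zr; apply.
have rcyc : forall w, w \in r -> w \notin cyc.
  move=> w wr; apply/negP => wc; have := allP Ar w wr; rewrite /A /= wc /=.
  by rewrite negbK => /eqP wx; move: xr; rewrite -wx wr.
have xy : x != y by rewrite eq_sym.
have [p1 [p2 [R1 R2 Odd12]]] := routes Esym Cc Uc Oc xc yc xy.
case zst: (z \in st).
  have [s1 [s2 Est]] : exists s1 s2, st = s1 ++ z :: s2.
    by case/splitPr: zst => s1 s2; exists s1, s2.
  have := Ust; rewrite Est /= mem_cat inE !negb_or cat_uniq.
  case/andP => /and3P [xs1 xz xs2] /and3P [Us1 /hasPn H12 /andP [zs2 Us2]].
  have zs1 : z \notin s1 by apply: H12; rewrite inE eqxx.
  have Lst2 : last x st = last z s2 by rewrite Est last_cat.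
  have s1st : forall w, w \in s1 -> w \in st by move=> w ws; rewrite Est mem_cat ws.
  have s2st : forall w, w \in s2 -> w \in st by move=> w ws; rewrite Est mem_cat inE ws !orbT.
  have s12 : forall w, w \in s1 -> w \in z :: s2 -> False.
    by move=> w w1 w2; move: (H12 w w2); rewrite w1.
  move: Pst; rewrite Est cat_path /= => /andP [Ps1 /andP [Ez Ps2]].
  have KA : forall q, route E cyc x y q -> odd (size q + size r + size s1).+1 -> False.
    move=> q [Pq Lq Uq Sq] Oq.
    apply: (IH (x :: q ++ r ++ rev s1) z s2).
    - move: Hn; rewrite Est size_cat /= ltnS addnS => H; apply: leq_trans H.
      by rewrite ltnS leq_addl.
    - rewrite /= !rcons_cat cat_path Pq Lq cat_path PrE -/z /=.
      have := rev_path E x (rcons s1 z).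
      rewrite last_rcons belast_rcons (eq_path Esym') rcons_path Ps1 Ez rev_cons => ->.
      by [].
    - have -> : x :: q ++ r ++ rev s1 = (x :: q) ++ r ++ rev s1 by [].
      apply: uniq3 => //.
      + by case/andP: Ur.
      + by rewrite rev_uniq.
      + move=> w; rewrite inE => /orP [/eqP ->|wq] wr; first by rewrite wr in xr.
        by move: (rcyc w wr); rewrite (Sq w wq).
      + move=> w; rewrite inE mem_rev => /orP [/eqP ->|wq] ws; first by rewrite ws in xs1.
        by move: (Hdis w (s1st w ws)); rewrite (Sq w wq).
      + move=> w wr; rewrite mem_rev => ws.
        case: (memr w wr) => [wz|]; first by move: ws; rewrite wz (negPf zs1).
        by rewrite /Z /= s1st ?orbT.
    - by rewrite /= !size_cat size_rev addnA.
    - by rewrite inE !mem_cat zr !orbT.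
    - exact: Ps2.
    - by rewrite /= zs2.
    - by rewrite -Lst2.
    - move=> w; rewrite inE !mem_cat mem_rev => /or4P [/eqP ->|wq|wr|ws] wV.
      + by move: (Hav2 wV); rewrite Est; case: (s1).
      + by move: Uq; rewrite /= -(Hav1 w (Sq w wq) wV) wq.
      + by case: (memr w wr) => //; rewrite /Z /= wV.
      + exfalso; apply: (s12 w ws); rewrite (Hint w (s1st w ws) wV) Lst2.
        exact: mem_last.
    - move=> zV; have := Hint z zst zV; rewrite Lst2.
      case: (s2) zs2 => [|a s2'] //= zs2' Ez'.
      by move: zs2'; rewrite {1}Ez' mem_last.
    - by move=> w ws wV; rewrite -Lst2; apply: Hint => //; apply: s2st.
    - move=> w ws; rewrite inE !mem_cat mem_rev !negb_or; apply/and4P; split.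
      + by apply/negP => /eqP wx; move: xs2; rewrite -wx ws.
      + by apply/negP => wq; move: (Hdis w (s2st w ws)); rewrite (Sq w wq).
      + apply/negP => wr; case: (memr w wr) => [wz|]; first by move: zs2; rewrite -wz ws.
        by rewrite /Z /= s2st ?orbT.
      + by apply/negP => w1; apply: (s12 w w1); rewrite inE ws orbT.
  case: (boolP (odd (size p1 + size r + size s1).+1)) => H; first exact: KA p1 R1 H.
  apply: (KA p2 R2); move: H; rewrite !oddS !oddD Odd12.
  by case: (odd (size p2)); case: (odd (size r)); case: (odd (size s1)).
have zV : z \in V' by move: Zl; rewrite zst orbF.
have Hstb : forall w, w \in belast x st -> w \notin V'.
  move=> w wb; apply/negP => wV.
  have wu : w != last x st.
    by apply/negP => /eqP Ew; move: Ust; rewrite lastI rcons_uniq -Ew wb.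
  move: (mem_belast wb); rewrite inE => /orP [/eqP wx|wst].
    by move: wb; rewrite wx (Hav2 _) //; rewrite -wx.
  by move: wu; rewrite (Hint w wst wV) eqxx.
have KB : forall q, route E cyc x y q ->
    c (last x st) (+) c z = odd (size st + size q + size r).
  move=> q [Pq Lq Uq Sq].
  have := NBgood (u := last x st) (q := rev (belast x st) ++ q ++ r).
  rewrite !last_cat last_rev_belast Lq -/z !size_cat size_rev size_belast addnA.
  apply.
  - rewrite cat_path rev_path (eq_path Esym') Pst last_rev_belast cat_path Pq Lq.
    exact: PrE.
  - have -> : last x st :: rev (belast x st) ++ q ++ r = rev (x :: st) ++ q ++ r.
      by rewrite -revI.
    apply: uniq3.
    + by rewrite rev_uniq.
    + by case/andP: Uq.
    + by case/andP: Ur.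
    + move=> w; rewrite mem_rev inE => /orP [/eqP ->|wst] wq.
        by move: Uq; rewrite /= wq.
      by move: (Hdis w wst); rewrite (Sq w wq).
    + move=> w; rewrite mem_rev inE => /orP [/eqP ->|wst] wr; first by rewrite wr in xr.
      case: (memr w wr) => [wz|]; first by rewrite -wz wst in zst.
      by rewrite /Z /= wst orbT.
    + by move=> w wq wr; move: (rcyc w wr); rewrite (Sq w wq).
  - exact: Lst.
  - exact: zV.
  - move=> w; rewrite !mem_cat mem_rev => /or3P [wb|wq|wr] wV.
    + by move: (Hstb w wb); rewrite wV.
    + by move: Uq; rewrite /= -(Hav1 w (Sq w wq) wV) wq.
    + by case: (memr w wr) => // ; rewrite /Z /= wV.
have := KB p1 R1; have := KB p2 R2; rewrite !oddD Odd12 => ->.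
by case: (odd (size st)); case: (odd (size p2)); case: (odd (size r)).
Qed.


Lemma noodd cyc : cycle E cyc -> uniq cyc -> odd (size cyc) ->
  (forall a b, a \in cyc -> b \in cyc -> a \in V' -> b \in V' -> a = b) -> False.
Proof.
move=> Cc Uc Oc H1.
case: (boolP (has (fun w => w \in V') cyc)) => [/hasP [x xc xV] | /hasPn hn].
  apply: (@stem_ind 1 cyc x [::] isT Cc Uc Oc xc) => //.
  by move=> w wc wV; apply: H1.
have [x0 x0c] : exists x0, x0 \in cyc.
  by case: (cyc) Oc => [|a s] //; exists a; rewrite inE eqxx.
have [t [tV _]] := two_in x0 card2.
have := connB (cycle_VB Cc x0c) (VV tV); case/connectP => p Pp Ept.
have disj : forall w, (w \in cyc) -> (w \in V') -> False.
  by move=> w wc wV; move: (hn w wc); rewrite wV.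
have [y [q [yc Pq Lq Uq [Aq Zq]]]] :=
  hit_uniq (A := fun w => w \in cyc) (Z := fun w => w \in V') disj x0c Pp
    (eq_ind _ (fun v => v \in V') tV _ Ept).
apply: (@stem_ind (size q).+1 cyc y q (ltnSn _) Cc Uc Oc yc Pq Uq Lq) => //.
- by move=> w wc wV; move: (hn w wc); rewrite wV.
- by move=> yV; move: (hn y yc); rewrite yV.
- move=> w wq wV; have := mem_lastI (w := w) (y := y) (r := q).
  rewrite inE wq orbT => /(_ isT) /orP [wb|/eqP //].
  by move/allP: Zq => /(_ w wb); rewrite wV.
- by move=> w wq; exact: (allP Aq w wq).
Qed.

Lemma walks n :
  (forall s, size s <= n -> cycle E s -> ~~ odd (size s)) /\
  (forall u q, size q <= n -> path E u q -> u \in V' -> last u q \in V' ->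
     c u (+) c (last u q) = odd (size q)).
Proof.
elim: n => [|n [IHa IHb]].
  split; first by case.
  by move=> u [|a q] //= _ _ _ _; rewrite addbb.
have Pa : forall s, size s <= n.+1 -> cycle E s -> ~~ odd (size s).
  move=> s Hs Cs.
  case: (boolP [exists a, exists b, [&& a \in s, b \in s, a \in V', b \in V' & a != b]]).
    case/existsP => a /existsP [b /and5P [a_s bs aV bV ab]].
    case: (rot_to a_s) => i s' Hrot.
    have Cs' : cycle E (a :: s') by rewrite -Hrot rot_cycle.
    have Ss : size (a :: s') = size s by rewrite -Hrot size_rot.
    have bs' : b \in s' by move: bs; rewrite -(mem_rot i) Hrot inE eq_sym (negPf ab).
    case/splitPr: bs' Cs' Ss => t1 t2 Cs' Ss.
    move: Cs'; rewrite /= rcons_cat cat_path /= => /andP [Pt1 /andP [Eb Pt2]].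
    move: Hs; rewrite -Ss /= size_cat /= => /ar2 [S1 S2].
    have H1 := IHb a (rcons t1 b); rewrite size_rcons last_rcons rcons_path Pt1 Eb in H1.
    have {H1} := H1 S1 isT aV bV.
    have H2 := IHb b (rcons t2 a); rewrite size_rcons last_rcons in H2.
    have {H2} := H2 S2 Pt2 bV aV.
    rewrite oddD !oddS.
    by case: (c a); case: (c b); case: (odd (size t1)); case: (odd (size t2)).
  move=> H1; case: (boolP (uniq s)) => Us.
    apply/negP => Os; apply: (noodd Cs Us Os) => a b a_s bs aV bV.
    apply/eqP; apply: contraNT H1 => ab; apply/existsP; exists a.
    by apply/existsP; exists b; rewrite a_s bs aV bV ab.
  have [s1 [y [s2 [s3 Es]]]] := dup_split Us.
  have : cycle E (rot (size s1) s) by rewrite rot_cycle.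
  rewrite Es rot_size_cat /= -catA /= rcons_cat cat_path /=.
  case/andP => P2 /andP [Ey P3].
  move: Hs; rewrite Es size_cat /= size_cat /= => /ar1 [S2 S3].
  have := IHa (y :: s2) S2; rewrite /= rcons_path P2 Ey => /(_ isT).
  have := IHa (y :: s3 ++ s1); rewrite /= size_cat => /(_ S3 P3).
  rewrite ?oddD ?oddS ?oddD ?oddS ?oddD ?oddS.
  by case: (odd (size s1)); case: (odd (size s2)); case: (odd (size s3)).
split => //.
move=> u q Hq Pq uV lV.
case: (boolP (uniq (u :: q))) => Uq.
  case: (boolP (has (fun w => (w \in V') && (w != last u q)) q)).
    case/hasP => w wq /andP [wV wl].
    move: Uq; case/splitPr: wq Hq Pq lV wl => q1 q2 Hq Pq lV wl _.
    rewrite last_cat /= in lV wl *.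
    have q2n : 0 < size q2 by case: (q2) wl => //=; rewrite eqxx.
    move: Hq; rewrite size_cat /= => /ar3 /(_ q2n) [S1 S2].
    move: Pq; rewrite cat_path /= => /andP [P1 /andP [Ew P2]].
    have H1 := IHb u (rcons q1 w); rewrite size_rcons last_rcons rcons_path P1 Ew in H1.
    have {H1} := H1 S1 isT uV wV.
    have {IHa IHb} := IHb w q2 S2 P2 wV lV.
    rewrite ?oddD ?oddS ?oddD ?oddS ?oddD ?oddS.
    by case: (c u); case: (c w); case: (c (last w q2)); case: (odd (size q1));
      case: (odd (size q2)).
  move/hasPn => Hn; apply: NBgood => // w wq wV; apply/eqP.
  by move: (Hn w wq); rewrite wV /= negbK.
have [s1 [y [s2 [s3 Es]]]] := dup_split Uq.
case: s1 Es => [|a s1] /= [Eu Eq]; subst.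
  move: Pq; rewrite cat_path /= => /andP [P2 /andP [Ey P3]].
  move: Hq; rewrite size_cat /= => /ar5 [S2 S3].
  have := Pa (y :: s2) S2; rewrite /= rcons_path P2 Ey => /(_ isT).
  rewrite last_cat /= in lV *.
  have := IHb y s3 S3 P3 uV lV.
  rewrite ?oddD ?oddS ?oddD ?oddS ?oddD ?oddS.
  by case: (odd (size s2)); case: (odd (size s3)).
move: Pq; rewrite cat_path /= cat_path /= => /andP [P1 /andP [Ey /andP [P2 /andP [Ey2 P3]]]].
move: Hq; rewrite size_cat /= size_cat /= => /ar4 [S1 S2].
have := IHa (y :: s2) S2; rewrite /= rcons_path P2 Ey2 => /(_ isT).
rewrite last_cat /= last_cat /= in lV *.
have := IHb a (s1 ++ y :: s3); rewrite size_cat /= last_cat /= cat_path /= P1 Ey P3.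
move=> /(_ S1 isT uV lV).
rewrite ?oddD ?oddS ?oddD ?oddS ?oddD ?oddS.
by case: (odd (size s1)); case: (odd (size s2)); case: (odd (size s3)).
Qed.


Definition col (w : T) : bool :=
  if excluded_middle_informative (exists u q, [/\ u \in V', path E u q, last u q = w
                                                 & c u (+) odd (size q)])
  then true else false.

Lemma colE u q : u \in V' -> path E u q -> col (last u q) = c u (+) odd (size q).
Proof.
move=> uV Pq; rewrite /col; case: excluded_middle_informative => [Hex|H] /=.
  case: Hex => u2 [q2 [u2V P2 L2 Pa2]].
  have W := (walks (size q2 + size q)).2 u2 (q2 ++ rev (belast u q)).
  rewrite size_cat size_rev size_belast leqnn last_cat L2 last_rev_belast in W.
  have := W isT _ u2V uV.
  rewrite cat_path P2 L2 rev_path (eq_path Esym') Pq => /(_ isT).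
  move: Pa2; rewrite oddD.
  by case: (c u2); case: (c u); case: (odd (size q2)); case: (odd (size q)).
case: (boolP (c u (+) odd (size q))) => // Hc; exfalso; apply: H.
by exists u, q; split.
Qed.

Lemma col_bip : bipartition VB EB col.
Proof.
move=> x y xV yV Exy.
have [t [tV _]] := two_in x card2.
have := connB (VV tV) xV; case/connectP => p Pp Ex.
have Ey : E x y by apply/and3P.
rewrite Ex (colE tV Pp).
have := colE (q := rcons p y) tV; rewrite last_rcons size_rcons rcons_path Pp -Ex Ey.
move=> /(_ isT) ->.
by rewrite oddS; case: (c t); case: (odd (size p)).
Qed.

End Graph.

Theorem lemma3p5 (T : finType) (e : rel T)
    (V' : {set T}) (E' : rel T) (VB : {set T}) (EB : rel T) :
  simple_graph e ->
  subgraph_of V' E' [set: T] e -> two_connected V' E' -> bipartite V' E' ->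
  subgraph_of VB EB [set: T] e -> two_connected VB EB ->
  subgraph_of V' E' VB EB ->
  ~ bipartite VB EB ->
  exists (u : T) (p : seq T), is_path_in VB EB u p /\ bad_path V' E' u p.
Proof.
move=> [esym eirr] _ [c3 connV _] [c bipc] [_ EBsym EBe] [_ connB conn2]
  [VsubB _ _] nbip.
apply: NNPP => H; apply: nbip; exists (col VB V' EB c).
apply: (col_bip (E' := E')) => //.
- by move=> x; apply/negP => /EBe /andP [exx _]; move: (eirr x); rewrite exx.
- by move=> u p P B; apply: H; exists u, p.
- by apply: leq_trans c3.
Qed.
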